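(* (1) Let $\mathbb{F}=\langle x_1,\dots,x_n,y_1,\dots,y_m\rangle$ be free, $e\in\langle y_1,\dots,y_m\rangle$, and $\rho\in\mathcal{R}(\mathbb{F})=\mathrm{Hom}(\mathbb{F},SL(2,\mathbb{C}))$ with $\operatorname{trace}(\rho(e))\neq -2$. Let $S=(U,\widetilde U,P)$ be a standard neighborhood of $\rho(e)$ and let $V\subset\mathcal{R}(\mathbb{F})$ be an open neighborhood of $\rho$ with $\mathrm{ev}_e(V)\subset U$. Then the map $\tau_H\colon V\times P\to\mathcal{R}(\mathbb{F})$ given by $\tau_H(\eta,z)(x_i)=\eta(x_i)$ and $\tau_H(\eta,z)(y_j)=$ the conjugate of $\eta(y_j)$ by $\exp(z\cdot\log(\eta(e)))$, is holomorphic. (2) Let $\mathbb{F}=\langle x_1,\dots,x_{n-1}\rangle*\langle t\rangle$, $e\in\langle x_1,\dots,x_{n-1}\rangle$, $\rho\in\mathcal{R}(\mathbb{F})$ with $\operatorname{trace}(\rho(e))\neq-2$, and $S=(U,\widetilde U,P)$, $V$ as in (1). Then the map $\tau_H\colon V\times P\to\mathcal{R}(\mathbb{F})$ given by $\tau_H(\eta,z)(x_i)=\eta(x_i)$, $\tau_H(\eta,z)(t)=\eta(t)\exp(z\cdot\log(\eta(e)))$, is holomorphic.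
   Context: $\mathcal{R}(\mathbb{F})=\mathrm{Hom}(\mathbb{F},SL(2,\mathbb{C}))\cong SL(2,\mathbb{C})^{r}\subset\mathbb{C}^{4r}$ for $\mathbb{F}$ free of rank $r$, and $\mathrm{ev}_g\colon\mathcal{R}(\mathbb{F})\to SL(2,\mathbb{C})$, $\eta\mapsto\eta(g)$. For $\epsilon>0$, $P_\epsilon$ is the $\epsilon$-neighborhood of $[0,1]$ in $\mathbb{C}$. A standard neighborhood of $g\in SL(2,\mathbb{C})$ (with $\operatorname{trace}g\ne-2$) is a tuple $(U_g,\widetilde U_g,P)$ where $P=P_\epsilon$, $\widetilde U_g\subset\mathfrak{sl}_2\mathbb{C}$ is an open neighborhood of some $v_g$ with $\exp(v_g)=g$, $U_g=\exp(\widetilde U_g)$, $\exp(P\cdot\widetilde U_g)\subset SL(2,\mathbb{C})\setminus\{-I\}$, $\exp$ restricted to the $\epsilon$-neighborhood of $\{sv_g:s\in[0,1]\}$ is biholomorphic onto its image, and $P\cdot\widetilde U_g$ is contained in that neighborhood. For $h\in U_g$, $\log(h)$ denotes the unique $v\in\widetilde U_g$ with $\exp(v)=h$. *)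

(* Defs.v *)
From mathcomp Require Import all_boot all_order all_algebra.
From mathcomp Require Import all_classical all_reals all_analysis.
From mathcomp.real_closed Require Import complex.
Import numFieldNormedType.Exports.
Import Order.TTheory GRing.Theory Num.Theory.

Set Implicit Arguments.
Unset Strict Implicit.
Unset Printing Implicit Defensive.

Local Open Scope ring_scope.
Local Open Scope complex_scope.
Local Open Scope classical_set_scope.

Section Defs.
Variable R : realType.
Local Notation C := (R[i]^o).

Definition holo_on (U W : normedModType C) (D : set U) (f : U -> W) : Prop :=
  forall p, D p ->
    exists O : set U, [/\ open O, O p &
      exists g : U -> W,
        (forall q, O q -> differentiable g q) /\
        (forall q, D q -> O q -> f q = g q)].

Definition expm (v : 'M[C]_2) : 'M[C]_2 :=
  lim ((fun N : nat => \sum_(k < N) (k`!%:R)^-1 *: v ^+ k) @ \oo).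

Definition sl2 : set 'M[C]_2 := [set v | \tr v = 0].
Definition SL2 : set 'M[C]_2 := [set g | \det g = 1].

Definition Peps (eps : R) : set C :=
  [set z | exists s : R, [/\ 0 <= s, s <= 1 & `|z - s%:C| < eps%:C]].

Definition segnbhd (eps : R) (v : 'M[C]_2) : set 'M[C]_2 :=
  [set w | sl2 w /\ exists s : R, [/\ 0 <= s, s <= 1 & `|w - s%:C *: v| < eps%:C]].

Definition std_nbhd (g : 'M[C]_2) (U Ut : set 'M[C]_2) (eps : R) : Prop :=
  exists vg : 'M[C]_2,
  [/\ (0 < eps /\ exists O : set 'M[C]_2, open O /\ Ut = O `&` sl2) /\ Ut vg /\ expm vg = g,
      U = expm @` Ut,
      (forall z v, Peps eps z -> Ut v ->
         SL2 (expm (z *: v)) /\ expm (z *: v) <> -1),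
      [/\ holo_on (segnbhd eps vg) expm,
          (forall w1 w2, segnbhd eps vg w1 -> segnbhd eps vg w2 ->
             expm w1 = expm w2 -> w1 = w2) &
          exists h : 'M[C]_2 -> 'M[C]_2,
            (forall w, segnbhd eps vg w -> h (expm w) = w) /\
            holo_on (expm @` segnbhd eps vg) h]
    & (forall z v, Peps eps z -> Ut v -> segnbhd eps vg (z *: v))].

Definition logS (Ut : set 'M[C]_2) (h : 'M[C]_2) : 'M[C]_2 :=
  xget 0 [set v | Ut v /\ expm v = h].

(* R(F) for F free of rank r: tuples of r matrices, encoded as an r x 4 matrix
   whose i-th row is mxvec of the image of the i-th generator. *)
Definition rep_gen (r : nat) (M : 'M[C]_(r, 2 * 2)) (i : 'I_r) : 'M[C]_2 :=
  vec_mx (row i M).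
Definition rep_enc (r : nat) (f : 'I_r -> 'M[C]_2) : 'M[C]_(r, 2 * 2) :=
  \matrix_(i, j) (mxvec (f i)) 0 j.
Definition RepF (r : nat) : set 'M[C]_(r, 2 * 2) :=
  [set M | forall i, SL2 (rep_gen M i)].

(* elements of a free group on generators indexed by I, as words:
   (j, false) is the letter a_j, (j, true) is a_j^{-1} *)
Definition word (I : Type) := seq (I * bool).
Definition eval_word (I : Type) (gen : I -> 'M[C]_2) (w : word I) : 'M[C]_2 :=
  \prod_(l <- w) (if l.2 then invmx (gen l.1) else gen l.1).

(* part (1): F = <x_1..x_n, y_1..y_m>, generator x_i is lshift m i,
   generator y_j is rshift n j *)
Definition ev_y (n m : nat) (w : word 'I_m) (eta : 'M[C]_(n + m, 2 * 2)) :=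
  eval_word (fun j => rep_gen eta (rshift n j)) w.

Definition tauH1 (n m : nat) (e : word 'I_m) (Ut : set 'M[C]_2)
    (p : ('M[C]_(n + m, 2 * 2) * C)%type) : 'M[C]_(n + m, 2 * 2) :=
  let eta := p.1 in
  let g := expm (p.2 *: logS Ut (ev_y e eta)) in
  rep_enc (fun i => match fintype.split i with
                    | inl _ => rep_gen eta i
                    | inr _ => g * rep_gen eta i * invmx g
                    end).

(* part (2): F = <x_1..x_k> * <t> (k = n-1), generator x_i is lshift 1 i,
   generator t is rshift k ord0 *)
Definition ev_x (k : nat) (w : word 'I_k) (eta : 'M[C]_(k + 1, 2 * 2)) :=
  eval_word (fun j => rep_gen eta (lshift 1 j)) w.

Definition tauH2 (k : nat) (e : word 'I_k) (Ut : set 'M[C]_2)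
    (p : ('M[C]_(k + 1, 2 * 2) * C)%type) : 'M[C]_(k + 1, 2 * 2) :=
  let eta := p.1 in
  let g := expm (p.2 *: logS Ut (ev_x e eta)) in
  rep_enc (fun i => match fintype.split i with
                    | inl _ => rep_gen eta i
                    | inr _ => rep_gen eta i * g
                    end).

End Defs.

(* Main.v *)
From HB Require Import structures.
Require Import Defs.
From mathcomp Require Import all_boot all_order all_algebra.
From mathcomp Require Import all_classical all_reals all_analysis.
From mathcomp.real_closed Require Import complex.
Import numFieldNormedType.Exports.
Import Order.TTheory GRing.Theory Num.Theory.
Local Open Scope ring_scope.
Local Open Scope complex_scope.
Local Open Scope classical_set_scope.


Section Diff.
Variable K : numFieldType.
Variable V : normedModType K.

Lemma diffD' (W : normedModType K) (f g : V -> W) x :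
  differentiable f x -> differentiable g x -> differentiable (fun q => f q + g q) x.
Proof. exact: differentiableD. Qed.

Lemma diffM' (f g : V -> K^o) x :
  differentiable f x -> differentiable g x -> differentiable (fun q => f q * g q) x.
Proof. exact: differentiableM. Qed.

Lemma diff_sum_seq (W : normedModType K) (I : Type) (r : seq I) (f : I -> V -> W) x :
  (forall i, differentiable (f i) x) -> differentiable (fun q => \sum_(i <- r) f i q) x.
Proof.
move=> H; elim: r => [|a r IH].
  have -> : (fun q => \sum_(i <- [::]) f i q) = cst 0.
    by apply: funext => q; rewrite big_nil.
  exact: differentiable_cst.
have -> : (fun q => \sum_(i <- a :: r) f i q) = (fun q => f a q + \sum_(i <- r) f i q).
  by apply: funext => q; rewrite big_cons.
exact: diffD'.
Qed.

Lemma diff_prod_seq (I : Type) (r : seq I) (f : I -> V -> K^o) x :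
  (forall i, differentiable (f i) x) -> differentiable (fun q => \prod_(i <- r) f i q) x.
Proof.
move=> H; elim: r => [|a r IH].
  have -> : (fun q => \prod_(i <- [::]) f i q) = cst 1.
    by apply: funext => q; rewrite big_nil.
  exact: differentiable_cst.
have -> : (fun q => \prod_(i <- a :: r) f i q) = (fun q => f a q * \prod_(i <- r) f i q).
  by apply: funext => q; rewrite big_cons.
exact: diffM'.
Qed.

Lemma diff_entry a b (F : V -> 'M[K^o]_(a, b)) x i j :
  differentiable F x -> differentiable (fun q => F q i j) x.
Proof.
move=> dF.
exact: (@differentiable_comp _ _ _ _ F (fun N : 'M[K^o]_(a, b) => N i j) x dF
          (differentiable_coord _ _ _)).
Qed.

Lemma diff_mx a b (F : V -> 'M[K^o]_(a, b)) x :
  (forall i j, differentiable (fun q => F q i j) x) -> differentiable F x.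
Proof.
move=> H.
have -> : F = (fun q => \sum_(i < a) \sum_(j < b) F q i j *: delta_mx i j).
  by apply: funext => q; rewrite -matrix_sum_delta.
apply: diff_sum_seq => i; apply: diff_sum_seq => j.
exact: differentiableZl.
Qed.

Lemma diff_mulmx a b c (F : V -> 'M[K^o]_(a, b)) (G : V -> 'M[K^o]_(b, c)) x :
  differentiable F x -> differentiable G x -> differentiable (fun q => F q *m G q) x.
Proof.
move=> dF dG; apply: diff_mx => i j.
have -> : (fun q => (F q *m G q) i j) = (fun q => \sum_k F q i k * G q k j).
  by apply: funext => q; rewrite mxE.
apply: diff_sum_seq => k; apply: diffM'; exact: diff_entry.
Qed.

Lemma diff_det n (F : V -> 'M[K^o]_n) x :
  differentiable F x -> differentiable (fun q => \det (F q)) x.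
Proof.
move=> dF; rewrite /determinant.
apply: diff_sum_seq => s; apply: diffM'; first exact: differentiable_cst.
apply: diff_prod_seq => i; exact: diff_entry.
Qed.

Lemma diff_adj n (F : V -> 'M[K^o]_n) x :
  differentiable F x -> differentiable (fun q => \adj (F q)) x.
Proof.
move=> dF; apply: diff_mx => i j.
have -> : (fun q => \adj (F q) i j) =
   (fun q => (-1) ^+ (j + i) * \det (row' j (col' i (F q)))).
  by apply: funext => q; rewrite mxE.
apply: diffM'; first exact: differentiable_cst.
apply: diff_det; apply: diff_mx => k l.
have -> : (fun q => row' j (col' i (F q)) k l) = (fun q => F q (lift j k) (lift i l)).
  by apply: funext => q; rewrite !mxE.
exact: diff_entry.
Qed.

Lemma diff_scale_mx a b (c : V -> K^o) (F : V -> 'M[K^o]_(a, b)) x :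
  differentiable c x -> differentiable F x -> differentiable (fun q => c q *: F q) x.
Proof.
move=> dc dF; apply: diff_mx => i j.
have -> : (fun q => (c q *: F q) i j) = (fun q => c q * F q i j).
  by apply: funext => q; rewrite mxE.
apply: diffM' => //; exact: diff_entry.
Qed.

Lemma diff_prodmx n (I : Type) (r : seq I) (F : I -> V -> 'M[K^o]_n.+1) x :
  (forall i, differentiable (F i) x) -> differentiable (fun q => \prod_(i <- r) F i q) x.
Proof.
move=> H; elim: r => [|a r IH].
  have -> : (fun q => \prod_(i <- [::]) F i q) = cst 1.
    by apply: funext => q; rewrite big_nil.
  exact: differentiable_cst.
have -> : (fun q => \prod_(i <- a :: r) F i q) = (fun q => F a q *m \prod_(i <- r) F i q).
  by apply: funext => q; rewrite big_cons.
exact: diff_mulmx.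
Qed.

End Diff.

Lemma diff_fst (K : numFieldType) (U W : normedModType K) (x : U * W) : differentiable (@fst U W) x.
Proof.
have lin : linear (@fst U W) by [].
pose fl := GRing.isLinear.Build _ _ _ _ _ lin.
pose fL : {linear (U * W)%type -> U} := HB.pack (@fst U W) fl.
apply: (@linear_differentiable _ _ _ fL).
move=> y; exact: cvg_fst.
Qed.

Lemma diff_snd (K : numFieldType) (U W : normedModType K) (x : U * W) : differentiable (@snd U W) x.
Proof.
have lin : linear (@snd U W) by [].
pose fl := GRing.isLinear.Build _ _ _ _ _ lin.
pose fL : {linear (U * W)%type -> W} := HB.pack (@snd U W) fl.
apply: (@linear_differentiable _ _ _ fL).
move=> y; exact: cvg_snd.
Qed.


Section Holo.
Variable R : realType.
Local Notation C := (R[i]^o).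

Lemma holo_ext (U W : normedModType C) (D : set U) (f g : U -> W) :
  (forall q, D q -> f q = g q) -> holo_on D g -> holo_on D f.
Proof.
move=> E H p Dp; have [Ob [oO Op [h [dh eh]]]] := H p Dp.
exists Ob; split=> //; exists h; split=> // q Dq Hq.
by rewrite E // eh.
Qed.

Lemma holo_diff (U W : normedModType C) (D : set U) (f : U -> W) :
  (forall x, differentiable f x) -> holo_on D f.
Proof.
move=> H p Dp; exists setT; split => //; first exact: openT.
by exists f; split.
Qed.

Lemma holo_pair (U W1 W2 : normedModType C) (D : set U) (f : U -> W1) (g : U -> W2) :
  holo_on D f -> holo_on D g -> holo_on D (fun q => (f q, g q)).
Proof.
move=> Hf Hg p Dp.
have [Ob1 [oO1 Hp1 [h1 [dh1 eh1]]]] := Hf p Dp.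
have [Ob2 [oO2 Hp2 [h2 [dh2 eh2]]]] := Hg p Dp.
exists (setI Ob1 Ob2); split => //; first exact: openI.
exists (fun q => (h1 q, h2 q)); split.
  by move=> q [Hq1 Hq2]; apply: differentiable_pair; [exact: dh1|exact: dh2].
by move=> q Dq [Hq1 Hq2]; rewrite eh1 // eh2.
Qed.

Lemma holo_comp (U W1 W2 : normedModType C) (D : set U) (S : set W1)
  (f : U -> W1) (h : W1 -> W2) :
  holo_on D f -> holo_on S h -> (forall q, D q -> S (f q)) ->
  holo_on D (fun q => h (f q)).
Proof.
move=> Hf Hh DS p Dp.
have [Ob1 [oO1 Hp1 [g1 [dg1 eg1]]]] := Hf p Dp.
have [Ob2 [oO2 Hp2 [g2 [dg2 eg2]]]] := Hh (f p) (DS p Dp).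
exists [set q | Ob1 q /\ Ob2 (g1 q)]; split.
- rewrite openE => q [Hq1 Hq2].
  have c1 := differentiable_continuous (dg1 q Hq1).
  have n1 : nbhs q Ob1 by apply: open_nbhs_nbhs; split.
  have n2 : nbhs (g1 q) Ob2 by apply: open_nbhs_nbhs; split.
  have n2' := c1 _ n2.
  rewrite /interior; near=> y; split; near: y; [exact: n1|exact: n2'].
- by split=> //; rewrite -eg1.
exists (fun q => g2 (g1 q)); split.
  by move=> q [Hq1 Hq2]; apply: (differentiable_comp (dg1 q Hq1) (dg2 _ Hq2)).
move=> q Dq [Hq1 Hq2]; rewrite -eg1 // eg2 //; first exact: DS.
by rewrite eg1.
Unshelve. all: by end_near. Qed.
End Holo.


Section Core.
Variable R : realType.
Local Notation C := (R[i]^o).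

Lemma diff_id (U : normedModType C) (x : U) : differentiable (fun p : U => p) x.
Proof.
have lin : linear (fun p : U => p) by [].
pose fl := GRing.isLinear.Build _ _ _ _ _ lin.
pose fL : {linear U -> U} := HB.pack (fun p : U => p) fl.
apply: (@linear_differentiable _ _ _ fL).
by move=> y.
Qed.

Lemma Peps1 (eps : R) : 0 < eps -> Peps eps (1 : C).
Proof.
move=> e0; exists 1; split => //.
by rewrite subrr normr0 ltcR.
Qed.

Lemma core (r : nat) (ev G : 'M[C]_(r, 2 * 2) -> 'M[C]_2)
  (Phi Phi' : (('M[C]_(r, 2 * 2) * C) * 'M[C]_2)%type -> 'M[C]_(r, 2 * 2))
  (g0 : 'M[C]_2) (U Ut : set 'M[C]_2) (eps : R) (V : set 'M[C]_(r, 2 * 2)) :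
  std_nbhd g0 U Ut eps ->
  (forall eta, V eta -> ev eta = G eta) ->
  (forall x, differentiable G x) ->
  (forall x, differentiable Phi x) ->
  (forall p g, \det g = 1 -> Phi' (p, g) = Phi (p, g)) ->
  (forall eta, V eta -> U (ev eta)) ->
  holo_on [set p : ('M[C]_(r, 2 * 2) * C)%type | V p.1 /\ Peps eps p.2]
    (fun p => Phi' (p, expm (p.2 *: logS Ut (ev p.1)))).
Proof.
move=> [vg [[[e0 _] [_ _]] Udef Hsl [Hexp _ [h [hK Hh]]] Hseg]] evG dG dPhi PhiE VU.
set D := [set p : ('M[C]_(r, 2 * 2) * C)%type | V p.1 /\ Peps eps p.2].
have HL : forall q, D q -> Ut (logS Ut (ev q.1)) /\ expm (logS Ut (ev q.1)) = ev q.1.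
  move=> q [Vq _].
  have ex : exists v, [set v | Ut v /\ expm v = ev q.1] v.
    by have := VU _ Vq; rewrite Udef => -[v Utv <-]; exists v.
  exact: (xgetPex 0 ex).
have Lseg : forall q, D q -> segnbhd eps vg (logS Ut (ev q.1)).
  move=> q Dq; rewrite -[logS _ _]scale1r; apply: Hseg; first exact: Peps1.
  by case: (HL q Dq).
have hL : forall q, D q -> h (G q.1) = logS Ut (ev q.1).
  move=> q Dq; rewrite -evG; last by case: Dq.
  by case: (HL q Dq) => _ {1}<-; apply: hK; apply: Lseg.
refine (@holo_ext _ _ _ D _ (fun p => Phi (p, expm (p.2 *: h (G p.1)))) _ _).
  move=> q Dq; rewrite hL // PhiE //.
  have [Utq _] := HL q Dq.
  by have [] := Hsl q.2 _ (proj2 Dq) Utq.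
refine (@holo_comp _ _ _ _ D (setT) (fun p => (p, expm (p.2 *: h (G p.1)))) (Phi) _ _ _).
  2: exact: holo_diff.
refine (@holo_pair _ _ _ _ D _ _ _ _); first by apply: holo_diff => x; exact: diff_id.
refine (@holo_comp _ _ _ _ D (segnbhd eps vg) (fun p => p.2 *: h (G p.1)) (@expm R) _ Hexp _); last first.
  move=> q Dq; rewrite hL //; apply: Hseg; first by case: Dq.
  by case: (HL q Dq).
refine (@holo_comp _ _ _ _ D (setT) (fun p => (p.2, h (G p.1))) (fun c => c.1 *: c.2) _ _ _) => //; last first.
  apply: holo_diff => x; apply: diff_scale_mx; [exact: diff_fst|exact: diff_snd].
refine (@holo_pair _ _ _ _ D _ _ _ _); first by apply: holo_diff => x; exact: diff_snd.
refine (@holo_comp _ _ _ _ D ((@expm R) @` segnbhd eps vg) (fun p => G p.1) h _ Hh _).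
  apply: holo_diff => x.
  exact: (@differentiable_comp _ _ _ _ fst G x (diff_fst _ _ _ x) (dG _)).
move=> q Dq; exists (logS Ut (ev q.1)); first exact: Lseg.
rewrite -evG; last by case: Dq.
by case: (HL q Dq).
by [].
Qed.
End Core.


Section Inst.
Variable R : realType.
Local Notation C := (R[i]^o).

Lemma inv_det1 (A : 'M[C]_2) : \det A = 1 -> invmx A = \adj A.
Proof. by move=> H; rewrite /invmx unitmxE H unitr1 invr1 scale1r. Qed.

Lemma diff_mul2 (W : normedModType C) (F G : W -> 'M[C]_2) x :
  differentiable F x -> differentiable G x -> differentiable (fun q => F q * G q) x.
Proof. exact: diff_mulmx. Qed.

Lemma diff_rep_gen (r : nat) (i : 'I_r) (x : 'M[C]_(r, 2 * 2)) :
  differentiable (fun M : 'M[C]_(r, 2 * 2) => rep_gen M i) x.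
Proof.
apply: diff_mx => a b.
have -> : (fun M : 'M[C]_(r, 2 * 2) => rep_gen M i a b) =
          (fun M => M i (mxvec_index a b)) by apply: funext => M; rewrite !mxE.
exact: differentiable_coord.
Qed.

Lemma diff_rep_enc (W : normedModType C) (r : nat) (F : W -> 'I_r -> 'M[C]_2) x :
  (forall i, differentiable (fun q => F q i) x) ->
  differentiable (fun q => rep_enc (F q)) x.
Proof.
move=> H; apply: diff_mx => i j.
case/mxvec_indexP: j => a b.
have -> : (fun q => rep_enc (F q) i (mxvec_index a b)) = (fun q => F q i a b).
  by apply: funext => q; rewrite mxE mxvecE.
exact: diff_entry.
Qed.

Lemma diff_q11 (r : nat) (i : 'I_r)
  (x : (('M[C]_(r, 2 * 2) * C) * 'M[C]_2)%type) :
  differentiable (fun q : (('M[C]_(r, 2 * 2) * C) * 'M[C]_2)%type => rep_gen q.1.1 i) x.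
Proof.
have d1 := @differentiable_comp _ _ _ _ fst fst x (diff_fst _ _ _ x) (diff_fst _ _ _ x.1).
have d2 := (@differentiable_comp _ _ _ _ (fst \o fst) (fun M => rep_gen M i) x d1 (diff_rep_gen _ _ _)).
exact: d2.
Qed.

Lemma diff_evword (r k : nat) (gi : 'I_k -> 'I_r) (e : word 'I_k) x :
  differentiable (fun eta : 'M[C]_(r, 2 * 2) =>
     \prod_(l <- e) (if l.2 then \adj (rep_gen eta (gi l.1)) else rep_gen eta (gi l.1))) x.
Proof.
apply: (@diff_prodmx _ _ 1 _ e
  (fun l eta => if l.2 then \adj (rep_gen eta (gi l.1)) else rep_gen eta (gi l.1))) => l.
case: l.2; last exact: diff_rep_gen.
by apply: diff_adj; apply: diff_rep_gen.
Qed.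

Lemma evword_eq (r k : nat) (gi : 'I_k -> 'I_r) (e : word 'I_k) (eta : 'M[C]_(r, 2 * 2)) :
  RepF eta ->
  eval_word (fun j => rep_gen eta (gi j)) e =
  \prod_(l <- e) (if l.2 then \adj (rep_gen eta (gi l.1)) else rep_gen eta (gi l.1)).
Proof.
move=> HR; rewrite /eval_word; apply: eq_bigr => l _.
by case: l.2 => //; rewrite inv_det1 //; apply: HR.
Qed.
End Inst.

Theorem lemma3p4 (R : realType) :
  (forall (n m : nat) (e : word 'I_m) (rho : 'M[R[i]^o]_(n + m, 2 * 2))
      (U Ut : set 'M[R[i]^o]_2) (eps : R) (V : set 'M[R[i]^o]_(n + m, 2 * 2)),
    RepF rho ->
    \tr (ev_y e rho) != -2 ->
    std_nbhd (ev_y e rho) U Ut eps ->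
    (exists O, open O /\ V = O `&` @RepF R (n + m)) ->
    V rho ->
    (forall eta, V eta -> U (ev_y e eta)) ->
    holo_on [set p : ('M[R[i]^o]_(n + m, 2 * 2) * R[i]^o)%type |
               V p.1 /\ Peps eps p.2]
            (tauH1 e Ut))
  /\
  (forall (k : nat) (e : word 'I_k) (rho : 'M[R[i]^o]_(k + 1, 2 * 2))
      (U Ut : set 'M[R[i]^o]_2) (eps : R) (V : set 'M[R[i]^o]_(k + 1, 2 * 2)),
    RepF rho ->
    \tr (ev_x e rho) != -2 ->
    std_nbhd (ev_x e rho) U Ut eps ->
    (exists O, open O /\ V = O `&` @RepF R (k + 1)) ->
    V rho ->
    (forall eta, V eta -> U (ev_x e eta)) ->
    holo_on [set p : ('M[R[i]^o]_(k + 1, 2 * 2) * R[i]^o)%type |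
               V p.1 /\ Peps eps p.2]
            (tauH2 e Ut)).
Proof.
split.
- move=> n m e rho U Ut eps V _ _ Hs [Ob [_ VE]] _ VU.
  have VR : forall eta, V eta -> RepF eta by rewrite VE => eta [].
  refine (@core R (n + m) (ev_y e)
    (fun eta => \prod_(l <- e) (if l.2 then \adj (rep_gen eta (rshift n l.1))
                                  else rep_gen eta (rshift n l.1)))
    (fun pg => rep_enc (fun i => match fintype.split i with
                    | inl _ => rep_gen pg.1.1 i
                    | inr _ => pg.2 * rep_gen pg.1.1 i * \adj pg.2
                    end))
    (fun pg => rep_enc (fun i => match fintype.split i with
                    | inl _ => rep_gen pg.1.1 i
                    | inr _ => pg.2 * rep_gen pg.1.1 i * invmx pg.2
                    end))
    _ U Ut eps V Hs
    (fun eta Veta => @evword_eq R _ _ _ e eta (VR _ Veta))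
    (@diff_evword R _ _ _ e)
    _ _ VU) => //.
  + move=> x; apply: diff_rep_enc => i.
    case: (fintype.split i) => j; first exact: diff_q11.
    apply: diff_mul2.
      apply: diff_mul2.
        exact: diff_snd.
      exact: diff_q11.
    by apply: diff_adj; apply: diff_snd.
  + by move=> p g Hg /=; rewrite inv_det1.
- move=> k e rho U Ut eps V _ _ Hs [Ob [_ VE]] _ VU.
  have VR : forall eta, V eta -> RepF eta by rewrite VE => eta [].
  refine (@core R (k + 1) (ev_x e)
    (fun eta => \prod_(l <- e) (if l.2 then \adj (rep_gen eta (lshift 1 l.1))
                                  else rep_gen eta (lshift 1 l.1)))
    (fun pg => rep_enc (fun i => match fintype.split i with
                    | inl _ => rep_gen pg.1.1 i
                    | inr _ => rep_gen pg.1.1 i * pg.2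
                    end))
    (fun pg => rep_enc (fun i => match fintype.split i with
                    | inl _ => rep_gen pg.1.1 i
                    | inr _ => rep_gen pg.1.1 i * pg.2
                    end))
    _ U Ut eps V Hs
    (fun eta Veta => @evword_eq R _ _ _ e eta (VR _ Veta))
    (@diff_evword R _ _ _ e)
    _ _ VU) => //.
  + move=> x; apply: diff_rep_enc => i.
    case: (fintype.split i) => j; first exact: diff_q11.
    apply: diff_mul2.
      exact: diff_q11.
    exact: diff_snd.
Qed.
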